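(* Let $F$ be an algebraically closed field, $l>1$ an integer coprime to the characteristic of $F$, $\xi\in F$ a primitive $l$-th root of $1$, $m\ge1$, and $$Clg(l,m)=\langle x_1,\ldots,x_m \mid x_i^l=1;\ x_i^{-1}x_jx_i=\xi x_j \ (i<j);\ x_i^{-1}x_jx_i=\xi^{-1}x_j \ (i>j)\rangle.$$ Then $Clg(l,m)$ has no proper nonzero two-sided ideals that are invariant under all automorphisms of $Clg(l,m)$. *)

(* Defs.v *)
From HB Require Import structures.
From mathcomp Require Import all_boot all_order all_algebra.
Set Implicit Arguments. Unset Strict Implicit. Unset Printing Implicit Defensive.
Import Order.TTheory GRing.Theory Num.Theory.
Local Open Scope ring_scope.

(* Defining relations of Clg(l,m) for a family x : 'I_m -> A in an F-algebra A.
   x_i^{-1} x_j x_i = xi x_j  (i<j)  is written  x_j x_i = xi (x_i x_j);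
   x_i^{-1} x_j x_i = xi^-1 x_j (i>j) is written x_j x_i = xi^-1 (x_i x_j)
   (equivalent since x_i is invertible, x_i^l = 1). *)
Definition clg_rels (F : fieldType) (A : algType F) (l : nat) (xi : F)
    (m : nat) (x : 'I_m -> A) : Prop :=
  [/\ forall i, x i ^+ l = 1,
      forall i j : 'I_m, (i < j)%N -> x j * x i = xi *: (x i * x j)
    & forall i j : 'I_m, (j < i)%N -> x j * x i = xi^-1 *: (x i * x j)].

Definition is_clg (F : fieldType) (A : algType F) (l : nat) (xi : F)
    (m : nat) (x : 'I_m -> A) : Prop :=
  clg_rels l xi x /\
  forall (B : algType F) (y : 'I_m -> B), clg_rels l xi y ->
    exists f : {lrmorphism A -> B},
      (forall i, f (x i) = y i) /\
      forall g : {lrmorphism A -> B}, (forall i, g (x i) = y i) -> g =1 f.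

Definition two_sided_ideal (R : nzRingType) (I : R -> Prop) : Prop :=
  [/\ I 0, (forall a b, I a -> I b -> I (a - b)),
      (forall r a, I a -> I (r * a)) & (forall r a, I a -> I (a * r))].

Definition is_alg_aut (F : fieldType) (A : algType F)
    (f : {lrmorphism A -> A}) : Prop := bijective f.

Definition aut_invariant (F : fieldType) (A : algType F) (I : A -> Prop) : Prop :=
  forall f : {lrmorphism A -> A}, is_alg_aut f -> forall a, I a -> I (f a).

(* Main.v *)
From HB Require Import structures.
From mathcomp Require Import all_boot all_order all_algebra.
From Stdlib Require Import Classical IndefiniteDescription.
Require Import Defs.
Set Implicit Arguments. Unset Strict Implicit. Unset Printing Implicit Defensive.
Import GRing.Theory.
Local Open Scope ring_scope.

Lemma pb_ex (P : Prop) : exists b : bool, b = true <-> P.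
Proof.
by case: (classic P) => h; [exists true | exists false]; split => // /h.
Qed.
Definition pb (P : Prop) : bool :=
  proj1_sig (constructive_indefinite_description _ (pb_ex P)).
Lemma pbP (P : Prop) : reflect P (pb P).
Proof.
rewrite /pb; case: constructive_indefinite_description => b [h1 h2] /=.
by case: b h1 h2 => h1 h2; constructor; [apply: h1 | move=> /h2].
Qed.

Section Span.
Variables (F : fieldType) (A : algType F) (m : nat) (x : 'I_m -> A).
Definition mono (s : seq 'I_m) : A := \prod_(j <- s) x j.
Definition rep (r : seq (F * seq 'I_m)) : A := \sum_(p <- r) p.1 *: mono p.2.
Definition Sp (a : A) : Prop := exists r, a = rep r.
Definition spb : pred A := fun a => pb (Sp a).
Lemma spbP a : reflect (Sp a) (spb a).
Proof. exact: pbP. Qed.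

Lemma mono_cat s t : mono (s ++ t) = mono s * mono t.
Proof. by rewrite /mono big_cat. Qed.

Lemma spb_closed : GRing.subsemialg_closed spb.
Proof.
split.
- apply/spbP; exists [:: (1, [::])]; by rewrite /rep big_seq1 /mono big_nil scale1r.
- split; first by apply/spbP; exists [::]; rewrite /rep big_nil.
  move=> a b /spbP[r1 ->] /spbP[r2 ->]; apply/spbP; exists (r1 ++ r2).
  by rewrite /rep big_cat.
- move=> c a /spbP[r ->]; apply/spbP; exists [seq (c * p.1, p.2) | p <- r].
  rewrite /rep big_map scaler_sumr; apply: eq_bigr => p _; by rewrite scalerA.
- move=> a b /spbP[r1 ->] /spbP[r2 ->]; apply/spbP.
  exists [seq (p.1 * q.1, p.2 ++ q.2) | p <- r1, q <- r2].
  rewrite /rep big_allpairs_dep mulr_suml; apply: eq_bigr => p _.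
  rewrite mulr_sumr; apply: eq_bigr => q _.
  by rewrite mono_cat -scalerAl -scalerAr scalerA.
Qed.

Record spT := SpT { spval :> A; _ : spb spval }.
HB.instance Definition _ := [isSub for spval].
HB.instance Definition _ := [Choice of spT by <:].
HB.instance Definition _ := GRing.SubChoice_isSubAlgebra.Build F A spb spT spb_closed.

Lemma xin i : spb (x i).
Proof. apply/spbP; exists [:: (1, [:: i])]. by rewrite /rep big_seq1 /mono big_seq1 scale1r. Qed.
Definition y i : spT := SpT (xin i).
Lemma yval i : val (y i) = x i. Proof. by []. Qed.
Definition spv (a : spT) : A := val a.
HB.instance Definition _ := GRing.RMorphism.copy spv val.
HB.instance Definition _ := GRing.Linear.copy spv val.

Lemma span_all (l : nat) (xi : F) : is_clg l xi x -> forall a, Sp a.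
Proof.
move=> [[h1 h2 h3] univ] a.
have ry : clg_rels l xi y.
  split.
  - move=> i; apply: val_inj; by rewrite rmorphXn rmorph1 /= h1.
  - move=> i j lt; apply: val_inj; by rewrite linearZ !rmorphM /= h2.
  - move=> i j lt; apply: val_inj; by rewrite linearZ !rmorphM /= h3.
have [f [fx _]] := univ _ y ry.
have [g [gx uq]] := univ _ x (And3 h1 h2 h3).
have e1 := uq (spv \o f) (fun i => ltac:(by rewrite /= fx)).
have e2 := uq idfun (fun i => erefl).
apply/spbP; rewrite -[a]/(idfun a) e2 -e1 /=.
by case: (f a).
Qed.
End Span.

Section Main.
Variables (F : fieldType) (A : algType F) (m : nat) (x : 'I_m -> A) (l : nat) (xi : F).
Hypothesis hl : (0 < l)%N.
Hypothesis hxi : l.-primitive_root xi.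
Hypothesis hrel : clg_rels l xi x.

Local Notation mono := (@mono F A m x).
Local Notation rep := (@rep F A m x).

Lemma xi_neq0 : xi != 0.
Proof.
apply/eqP => e; have := prim_expr_order hxi; rewrite e expr0n.
by case: l hl => // n _ /eqP; rewrite eq_sym oner_eq0.
Qed.

Lemma comm_ji i j : exists c : F, c != 0 /\ x j * x i = c *: (x i * x j).
Proof.
case: hrel => _ h2 h3.
case: (ltngtP i j) => [lt|lt|e].
- by exists xi; split; [exact: xi_neq0 | exact: h2].
- by exists xi^-1; split; [rewrite invr_eq0 xi_neq0 | exact: h3].
- have -> : j = i by apply: val_inj.
  by exists 1; rewrite scale1r oner_eq0.
Qed.

Lemma commX i j c n : x j * x i = c *: (x i * x j) ->
  x j * x i ^+ n = c ^+ n *: (x i ^+ n * x j).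
Proof.
move=> h; elim: n => [|n IH]; first by rewrite !expr0 mulr1 mul1r scale1r.
rewrite exprSr mulrA IH -scalerAl -[x i ^+ n * x j * x i]mulrA h -scalerAr scalerA.
by rewrite exprSr -mulrA mulrC.
Qed.

Lemma pull i s : exists c : F, c != 0 /\
  mono s = c *: (x i ^+ count_mem i s * mono [seq j <- s | j != i]).
Proof.
elim: s => [|j s [c [c0 IH]]].
  by exists 1; rewrite oner_eq0 /mono big_nil expr0 mulr1 scale1r.
rewrite /mono big_cons -/(mono s) IH /=.
case: (eqVneq j i) => [->|ne].
  exists c; split => //; by rewrite -scalerAr mulrA -exprS add1n.
have [d [d0 hd]] := comm_ji i j.
exists (c * d ^+ count_mem i s); split; first by rewrite mulf_neq0 // expf_neq0.
rewrite /mono big_cons add0n -/(mono _) -scalerAr [x j * (_ * _)]mulrA (commX _ hd).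
by rewrite -scalerAl scalerA mulrA.
Qed.

Lemma count_filter_neq j i (s : seq 'I_m) :
  count_mem j [seq k <- s | k != i] = if j == i then 0%N else count_mem j s.
Proof.
rewrite count_filter; case: (eqVneq j i) => [e|ne]; first subst j.
  rewrite -(count_pred0 s); apply: eq_count => k /=.
  by rewrite andbN.
apply: eq_count => k /=; case: (eqVneq j k) => [<-|] //=; by rewrite ne.
Qed.

Lemma reduce s : (forall i, (l %| count_mem i s)%N) ->
  exists c : F, c != 0 /\ mono s = c%:A.
Proof.
move: {2}(size s) (leqnn (size s)) => n; elim: n s => [|n IH] s.
  rewrite leqn0 => /nilP -> _; exists 1; rewrite oner_eq0; split => //.
  by rewrite /mono big_nil scale1r.
case: s => [|i s'] hs hc.
  by exists 1; rewrite oner_eq0 /mono big_nil scale1r.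
have [c [c0 ->]] := pull i (i :: s').
have [k hk] := dvdnP (hc i).
case: hrel => h1 _ _.
rewrite hk mulnC exprM h1 expr1n mul1r.
have hs' : (size [seq j <- i :: s' | j != i] <= n)%N.
  rewrite size_filter /= eqxx /= add0n.
  by apply: leq_trans (count_size _ _) _; rewrite -ltnS.
have hc' : forall j, (l %| count_mem j [seq j <- i :: s' | j != i])%N.
  by move=> j; rewrite count_filter_neq; case: (j == i) => //; exact: hc.
have [d [d0 ->]] := IH _ hs' hc'.
exists (c * d); rewrite mulf_neq0 //; split => //.
by rewrite scalerA.
Qed.

Definition tinv (s : seq 'I_m) := flatten [seq nseq l.-1 j | j <- s].

Lemma count_tinv i s : count_mem i (tinv s) = (l.-1 * count_mem i s)%N.
Proof.
elim: s => [|j s IH]; first by rewrite /= muln0.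
rewrite /tinv /= count_cat count_nseq -/(tinv s) IH /=.
by rewrite mulnDr mulnC.
Qed.

Lemma unit_mono s : exists t,
  (exists c : F, c != 0 /\ mono (s ++ t) = c%:A) /\
  (exists c : F, c != 0 /\ mono (t ++ s) = c%:A).
Proof.
have key i : (l %| count_mem i s + l.-1 * count_mem i s)%N.
  by rewrite -{1}(mul1n (count_mem i s)) -mulnDl add1n prednK // dvdn_mulr.
exists (tinv s); split; apply: reduce => i; rewrite count_cat count_tinv //.
by rewrite addnC.
Qed.

Hypothesis huniv : forall (B : algType F) (y : 'I_m -> B), clg_rels l xi y ->
    exists f : {lrmorphism A -> B},
      (forall i, f (x i) = y i) /\
      forall g : {lrmorphism A -> B}, (forall i, g (x i) = y i) -> g =1 f.

Lemma rels_scale (w : 'I_m -> F) : (forall i, w i ^+ l = 1) ->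
  clg_rels l xi (fun i => w i *: x i).
Proof.
move=> hw; case: hrel => h1 h2 h3; split.
- by move=> i; rewrite exprZn hw h1 scale1r.
- move=> i j lt; rewrite -!scalerAl -!scalerAr !scalerA h2 // !scalerA.
  by congr (_ *: _); rewrite -[LHS]mulrA [LHS]mulrC [w i * xi]mulrC.
- move=> i j lt; rewrite -!scalerAl -!scalerAr !scalerA h3 // !scalerA.
  by congr (_ *: _); rewrite -[LHS]mulrA [LHS]mulrC [w i * _]mulrC.
Qed.

Lemma unique_id (g : {lrmorphism A -> A}) : (forall i, g (x i) = x i) -> g =1 id.
Proof.
move=> hg a.
have [f [fx uq]] := huniv (And3 (let: And3 a _ _ := hrel in a)
   (let: And3 _ b _ := hrel in b) (let: And3 _ _ c := hrel in c)).
have e1 := uq g hg; have e2 := uq idfun (fun i => erefl).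
by rewrite e1 -e2.
Qed.

Lemma aut_exists (w : 'I_m -> F) : (forall i, w i ^+ l = 1) ->
  exists s : {lrmorphism A -> A}, is_alg_aut s /\ forall i, s (x i) = w i *: x i.
Proof.
move=> hw.
have w0 i : w i != 0.
  apply/eqP => e; have := hw i; rewrite e expr0n.
  by case: l hl => // n _ /eqP; rewrite eq_sym oner_eq0.
have hw' i : (w i)^-1 ^+ l = 1 by rewrite exprVn hw invr1.
have [s [sx _]] := huniv (rels_scale hw).
have [t [tx _]] := huniv (rels_scale hw').
exists s; split => //; exists t.
- apply: (@unique_id (t \o s)) => i /=.
  rewrite sx linearZ /= tx scalerA.
  by rewrite mulfV // scale1r.
- apply: (@unique_id (s \o t)) => i /=.
  by rewrite tx linearZ /= sx scalerA mulVf // scale1r.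
Qed.

Lemma aut_mono (w : 'I_m -> F) (s : {lrmorphism A -> A}) :
  (forall i, s (x i) = w i *: x i) ->
  forall t, s (mono t) = (\prod_(j <- t) w j) *: mono t.
Proof.
move=> sx; elim => [|j t IH]; first by rewrite /mono !big_nil rmorph1 scale1r.
rewrite /mono !big_cons -/(mono t).
have -> : s (x j * mono t) = s (x j) * s (mono t) := rmorphM s _ _.
rewrite IH sx.
by rewrite -scalerAl -scalerAr scalerA.
Qed.

Definition chi (f : {ffun 'I_m -> 'I_l}) (t : seq 'I_m) : F :=
  \prod_(j <- t) xi ^+ f j.

Lemma chi_count f t : chi f t = \prod_(i < m) (xi ^+ count_mem i t) ^+ f i.
Proof.
elim: t => [|j t IH].
  rewrite /chi big_nil; apply/esym/big1 => i _; by rewrite expr0 expr1n.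
rewrite /chi big_cons -/(chi f t) IH.
under [RHS]eq_bigr => i _ do rewrite /= exprD exprMn.
rewrite big_split /=; congr (_ * _).
rewrite (bigD1 j) //= eqxx expr1 big1 ?mulr1 // => i ne.
by rewrite eq_sym (negbTE ne) expr0 expr1n.
Qed.

Lemma geom (z : F) : z ^+ l = 1 -> z != 1 -> \sum_(k < l) z ^+ k = 0.
Proof.
move=> zl z1; have := subrX1 z l; rewrite zl subrr => /esym/eqP.
by rewrite mulf_eq0 subr_eq0 (negbTE z1) /= => /eqP.
Qed.

Lemma sum_chi t : \sum_(f : {ffun 'I_m -> 'I_l}) chi f t =
  if [forall i, l %| count_mem i t]%N then (l%:R) ^+ m else 0.
Proof.
under eq_bigr => f _ do rewrite chi_count.
rewrite -(bigA_distr_bigA (fun (i : 'I_m) (k : 'I_l) => (xi ^+ count_mem i t) ^+ k)).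
case: (boolP [forall i, l %| count_mem i t]%N) => [/forallP all|]; last rewrite negb_forall => /existsP [i0 ni0].
  transitivity (\prod_(i < m) (l%:R : F)); last by rewrite prodr_const card_ord.
  apply: eq_bigr => i _.
  have : xi ^+ count_mem i t = 1 by apply/eqP; rewrite -(prim_order_dvd hxi).
  move=> ->; under eq_bigr => k _ do rewrite expr1n.
  by rewrite sumr_const card_ord.
rewrite (bigD1 i0) //= geom ?mul0r //.
  by rewrite -exprM mulnC exprM (prim_expr_order hxi) expr1n.
by rewrite -(prim_order_dvd hxi).
Qed.

Lemma rep_cons p r : rep (p :: r) = p.1 *: mono p.2 + rep r.
Proof. by rewrite /rep big_cons. Qed.

Section Ideal.
Variable S : {ffun 'I_m -> 'I_l} -> {lrmorphism A -> A}.
Hypothesis hS : forall f i, S f (x i) = xi ^+ f i *: x i.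

Lemma S_mono f t : S f (mono t) = chi f t *: mono t.
Proof. exact: (aut_mono (hS f)). Qed.

Lemma avg r : exists e : F, \sum_f S f (rep r) = e%:A.
Proof.
elim: r => [|p r [e IH]].
  exists 0; rewrite /rep big_nil scale0r; apply: big1 => f _; exact: raddf0.
rewrite /rep big_cons -/(rep r).
under eq_bigr => f _ do rewrite raddfD /= linearZ /= S_mono.
rewrite big_split /= IH -scaler_sumr -scaler_suml sum_chi.
case: ifP => [/forallP all|_]; last first.
  exists e; rewrite scale0r scaler0; exact: add0r.
have [c [_ ->]] := reduce all.
exists (p.1 * ((l%:R ^+ m) * c) + e).
by rewrite scalerDl !scalerA mulrA.
Qed.

Lemma S_diff f r : S f (rep r) - rep r = rep [seq (p.1 * (chi f p.2 - 1), p.2) | p <- r].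
Proof.
elim: r => [|p r IH]; first by rewrite /rep !big_nil raddf0 subrr.
rewrite map_cons !rep_cons -IH /=.
rewrite raddfD /= linearZ /= S_mono.
rewrite mulrBr mulr1 scalerBl -scalerA.
by rewrite opprD addrACA.
Qed.
End Ideal.

Lemma rep_mulr r t : rep r * mono t = rep [seq (p.1, p.2 ++ t) | p <- r].
Proof.
rewrite /rep big_map mulr_suml; apply: eq_bigr => p _.
by rewrite -scalerAl mono_cat.
Qed.

Lemma main_ideal (I : A -> Prop) : two_sided_ideal I -> aut_invariant I ->
  (l%:R : F) != 0 ->
  forall n r a, (size r <= n)%N -> I a -> a != 0 -> a = rep r -> I 1.
Proof.
move=> [I0 IB IL IR] Iinv N0.
have Isc c a : I a -> I (c *: a) by move=> Ia; rewrite -mulr_algl; exact: IL.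
have hS (f : {ffun 'I_m -> 'I_l}) : exists s : {lrmorphism A -> A}, is_alg_aut s /\
    forall i, s (x i) = xi ^+ f i *: x i.
  apply: aut_exists => i.
  by rewrite -exprM mulnC exprM (prim_expr_order hxi) expr1n.
pose S (f : {ffun 'I_m -> 'I_l}) := proj1_sig (constructive_indefinite_description _ (hS f)).
have SP (f : {ffun 'I_m -> 'I_l}) : is_alg_aut (S f) /\ forall i, S f (x i) = xi ^+ f i *: x i.
  exact: (proj2_sig (constructive_indefinite_description _ (hS f))).
have hSx (f : {ffun 'I_m -> 'I_l}) i : S f (x i) = xi ^+ f i *: x i by case: (SP f).
elim => [|n IHn] r a.
  by rewrite leqn0 => /nilP -> _ /negP + ar; rewrite ar /rep big_nil eqxx.
case: r => [|[c1 s1] r1] hs Ia a0 ar.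
  by move: a0; rewrite ar /rep big_nil eqxx.
have [t [[k [k0 hk]] [k' [k'0 hk']]]] := unit_mono s1.
set a' := a * mono t.
have Ia' : I a' by exact: IR.
have a'0 : a' != 0.
  apply/negP => /eqP e.
  have : a' * mono s1 = k' *: a by rewrite /a' -mulrA -mono_cat hk' mulr_algr.
  rewrite e mul0r => /esym/eqP; rewrite scaler_eq0 (negbTE k'0) /=.
  by apply/negP.
set r' := [seq (p.1, p.2 ++ t) | p <- (c1, s1) :: r1].
have ar' : a' = rep r' by rewrite /a' ar rep_mulr.
case: (classic (exists f : {ffun 'I_m -> 'I_l}, S f a' != a')) => [[f hf]|nf].
  pose r2 := [seq (p.1 * (chi f p.2 - 1), p.2) | p <- [seq (p.1, p.2 ++ t) | p <- r1]].
  apply: (IHn r2 (S f a' - a')).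
  - by rewrite /r2 !size_map -ltnS.
  - apply: IB => //; apply: Iinv => //; by case: (SP f).
  - by rewrite subr_eq0.
  rewrite ar' (S_diff (hSx) f) /r' /= /rep big_cons /=.
  have -> : (c1 * (chi f (s1 ++ t) - 1)) *: mono (s1 ++ t) = 0.
    rewrite -scalerA scalerBl scale1r -(S_mono hSx) hk.
    by rewrite rmorph_alg subrr scaler0.
  by rewrite add0r.
have Sfix (f : {ffun 'I_m -> 'I_l}) : S f a' = a'.
  by apply/eqP; apply/negPn/negP => h; apply: nf; exists f.
have [e he] := avg hSx r'.
rewrite -ar' in he.
have he' : \sum_(f : {ffun 'I_m -> 'I_l}) S f a' = \sum_(f : {ffun 'I_m -> 'I_l}) a'.
  by apply: eq_bigr => f _; exact: Sfix.
rewrite he' in he.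
rewrite sumr_const card_ffun !card_ord -scaler_nat natrX in he.
have e0 : e != 0.
  apply/eqP => e0; move: he; rewrite e0 scale0r => /eqP.
  by rewrite scaler_eq0 (negbTE (expf_neq0 m N0)) /= (negbTE a'0).
have -> : (1 : A) = (e^-1 * l%:R ^+ m) *: a'.
  by rewrite -scalerA he scalerA mulVf // scale1r.
exact: Isc.
Qed.
End Main.

Unset Implicit Arguments.
Theorem corollary1 (F : closedFieldType) (l : nat) (xi : F) (m : nat)
    (A : algType F) (x : 'I_m -> A) :
  (1 < l)%N ->
  (forall p : nat, p \in [pchar F] -> coprime p l) ->
  l.-primitive_root xi ->
  (1 <= m)%N ->
  is_clg l xi x ->
  forall I : A -> Prop,
    two_sided_ideal I -> aut_invariant I ->
    (forall a, I a -> a = 0) \/ (forall a, I a).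
Proof.
move=> hl1 hchar hxi hm hclg I hI hinv.
have hl : (0 < l)%N by apply: ltnW.
have [hrel huniv] := hclg.
have N0 : (l%:R : F) != 0.
  rewrite natf_neq0_pchar; apply/pnatP => // p pp pl.
  apply/negP => pc; have := hchar p pc; by rewrite prime_coprime // pl.
case: (classic (exists a, I a /\ a != 0)) => [[a [Ia a0]]|na].
  right; have [r ar] := span_all hclg a.
  have I1 := main_ideal hl hxi hrel huniv hI hinv N0 (leqnn _) Ia a0 ar.
  move=> b; rewrite -[b]mul1r; case: hI => _ _ _ IR; exact: IR.
left => a Ia; apply/eqP/negPn/negP => a0; apply: na; exists a; split => //.
Qed.
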